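(* Let $G$ be a finite simple undirected graph with vertex set $V$, $|V|=n\ge 1$, in which every vertex has degree at least $2$. Then $$E_{loc}(G)\le \tfrac12\bigl(1+CC(G)\bigr),$$ with equality when $G$ is a complete graph.
   Context: For a graph $H$ and vertices $i,j$, $d_H(i,j)$ is the number of edges in a shortest $i$–$j$ path in $H$, with $d_H(i,j)=\infty$ if no such path exists, and the convention $1/\infty=0$. For a graph $H$ with $k\ge 2$ vertices, its global efficiency is $E_{glob}(H)=\frac{1}{k(k-1)}\sum_{i\neq j} \frac{1}{d_H(i,j)}$, the sum over ordered pairs of distinct vertices. For a vertex $i$ of $G$, $G_i$ is the subgraph of $G$ induced by the neighbors of $i$ (not including $i$). The local efficiency is $E_{loc}(G)=\frac1n\sum_{i\in V} E_{glob}(G_i)$ and the (Watts–Strogatz) clustering coefficient is $CC(G)=\frac1n\sum_{i\in V}\frac{|E(G_i)|}{\binom{|V(G_i)|}{2}}$. *)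

(* Defs.v *)
From HB Require Import structures.
From mathcomp Require Import all_boot all_order all_algebra.
Set Implicit Arguments. Unset Strict Implicit. Unset Printing Implicit Defensive.
Import Order.TTheory GRing.Theory Num.Theory.

(* A finite simple graph: vertex type T : finType, adjacency e : rel T,
   symmetric and irreflexive. *)

Local Open Scope ring_scope.
Section GraphDefs.
Variables (T : finType) (e : rel T).

Definition nbhd (i : T) : {set T} := [set j | e i j].

Definition walk_in (S : {set T}) (u v : T) (k : nat) : bool :=
  (u \in S) &&
  [exists p : k.-tuple T,
     [&& path e u p, last u p == v & all (fun x => x \in S) p]].

(* 1 / d_H(u,v) for H the subgraph induced by S, with 1/oo = 0.
   A shortest u-v walk is a path, hence has at most #|T|-1 edges,
   so searching lengths 1..#|T| finds d_H(u,v) (for u <> v) if finite. *)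
Definition inv_dist (R : realFieldType) (S : {set T}) (u v : T) : R :=
  let ks := iota 1 #|T| in
  if has (walk_in S u v) ks
  then ((nth 0%N ks (find (walk_in S u v) ks))%:R)^-1
  else 0.

Definition Eglob (R : realFieldType) (S : {set T}) : R :=
  ((#|S| * (#|S| - 1))%N%:R)^-1 *
  \sum_(u in S) \sum_(v in S | v != u) inv_dist R S u v.

Definition nedges (S : {set T}) : nat :=
  #|[set p : T * T | [&& p.1 \in S, p.2 \in S & e p.1 p.2]]|./2.

Definition Eloc (R : realFieldType) : R :=
  (#|T|%:R)^-1 * \sum_(i : T) Eglob R (nbhd i).

Definition CC (R : realFieldType) : R :=
  (#|T|%:R)^-1 *
  \sum_(i : T) ((nedges (nbhd i))%:R / ('C(#|nbhd i|, 2))%:R).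

End GraphDefs.

(* Main.v *)
Require Import Defs.
From HB Require Import structures.
From mathcomp Require Import all_boot all_order all_algebra.
From mathcomp Require Import zify ring lra.
Import Order.TTheory GRing.Theory Num.Theory.
Local Open Scope ring_scope.

Lemma bin2_mul2 (n : nat) : ('C(n, 2) * 2 = n * n.-1)%N.
Proof.
elim: n => [|n IH] //.
rewrite binS bin1 mulnDl IH; case: n {IH} => [|n] //=; lia.
Qed.

Section Aux.
Variables (T : finType) (e : rel T) (e_sym : symmetric e) (e_irr : irreflexive e).

Lemma walk1 (S : {set T}) u v : walk_in e S u v 1 = [&& u \in S, v \in S & e u v].
Proof.
apply/idP/idP.
  case/andP=> uS /existsP[p]; case: p => [[|x [|y s]] sz] //= /and3P[].
  by rewrite andbT => exv /eqP <- /andP[-> _]; rewrite uS.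
case/and3P=> uS vS euv; rewrite /walk_in uS /=; apply/existsP.
by exists [tuple v]; rewrite /= euv eqxx vS.
Qed.

Lemma inv_dist_adj (R : realFieldType) (S : {set T}) u v :
  u \in S -> v \in S -> e u v -> inv_dist e R S u v = 1.
Proof.
move=> uS vS euv; rewrite /inv_dist.
have : (0 < #|T|)%N by apply/card_gt0P; exists u.
case: #|T| => [|n] // _.
by rewrite /= walk1 uS vS euv /= invr1.
Qed.

Lemma inv_dist_nadj (R : realFieldType) (S : {set T}) u v :
  ~~ e u v -> inv_dist e R S u v <= 2%:R^-1.
Proof.
move=> nuv; rewrite /inv_dist; case: ifP => [hh|_]; last by rewrite invr_ge0 ler0n.
have := nth_find 0%N hh; have := hh; rewrite has_find size_iota => lt.
rewrite nth_iota //; set i := find _ _ in lt *.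
case: i lt => [|i] _.
  by rewrite walk1 (negbTE nuv) !andbF.
move=> _; rewrite lef_pV2 ?posrE ?ltr0n // ler_nat; lia.
Qed.

Lemma inv_dist_ge0 (R : realFieldType) (S : {set T}) u v : 0 <= inv_dist e R S u v.
Proof. by rewrite /inv_dist; case: ifP => _; rewrite ?invr_ge0 ?ler0n. Qed.


Definition G (S : {set T}) (u v : T) : nat := [&& u \in S, v \in S & e u v].

Lemma cnt_pairs (S : {set T}) :
  #|[set p : T * T | [&& p.1 \in S, p.2 \in S & e p.1 p.2]]| =
  (\sum_u \sum_v G S u v)%N.
Proof.
rewrite pair_bigA /= -sum1_card big_mkcond /=; apply: eq_bigr => p _.
by rewrite inE /G; case: ifP.
Qed.

Lemma sum_G (S : {set T}) :
  (\sum_u \sum_v G S u v)%N = (\sum_(u in S) \sum_(v in S | v != u) (e u v : nat))%N.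
Proof.
rewrite [RHS]big_mkcond /=; apply: eq_bigr => u _.
case: ifP => uS; last by rewrite big1 // => v _; rewrite /G uS.
rewrite [RHS]big_mkcond /=; apply: eq_bigr => v _.
rewrite /G uS /=; case: (v \in S) => //=.
by case: eqVneq => [->|//]; rewrite e_irr.
Qed.

Lemma G_sym S u v : G S u v = G S v u.
Proof. by rewrite /G e_sym; case: (u \in S); case: (v \in S). Qed.

Lemma sum_G_even (S : {set T}) :
  exists Y, (\sum_u \sum_v G S u v)%N = (Y + Y)%N.
Proof.
pose H u v := if (enum_rank u < enum_rank v)%N then G S u v else 0%N.
exists (\sum_u \sum_v H u v)%N.
have -> : (\sum_u \sum_v G S u v = \sum_u \sum_v (H u v + H v u))%N.
  apply: eq_bigr => u _; apply: eq_bigr => v _; rewrite /H.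
  case: (ltngtP (enum_rank u) (enum_rank v)) => h.
  - by rewrite addn0.
  - by rewrite G_sym.
  - have /enum_rank_inj -> : enum_rank u = enum_rank v by apply: val_inj.
    by rewrite /G e_irr !andbF.
rewrite (eq_bigr (fun u => \sum_v H u v + \sum_v H v u)%N); last by move=> u _; rewrite big_split.
by rewrite big_split /= [X in (_ + X)%N]exchange_big.
Qed.


Lemma sum_ones (S : {set T}) :
  (\sum_(u in S) \sum_(v in S | v != u) (1 + (e u v : nat)))%N =
  (#|S| * (#|S| - 1) + #|[set p : T * T | [&& p.1 \in S, p.2 \in S & e p.1 p.2]]|)%N.
Proof.
rewrite cnt_pairs sum_G -sum_nat_const -big_split /=.
apply: eq_bigr => u uS; rewrite big_split /=; congr (_ + _)%N.
have := sum1_card (mem S); rewrite (bigD1 u) //= => <-; rewrite addKn; apply: eq_bigl => i; by rewrite !inE.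
Qed.

Lemma pt_bound (R : realFieldType) (S : {set T}) u v : u \in S -> v \in S ->
  inv_dist e R S u v <= (1 + (e u v : nat)%:R) / 2%:R.
Proof.
move=> uS vS; case: (boolP (e u v)) => h /=.
  by rewrite inv_dist_adj // -[1 + 1]/(2%:R) divff ?pnatr_eq0.
by rewrite addr0 mul1r inv_dist_nadj.
Qed.

Lemma Eglob_bound (R : realFieldType) (S : {set T}) : (2 <= #|S|)%N ->
  Eglob e R S <= (1 + (nedges e S)%:R / ('C(#|S|, 2))%:R) / 2%:R /\
  ((forall u v, u != v -> e u v) ->
   Eglob e R S = (1 + (nedges e S)%:R / ('C(#|S|, 2))%:R) / 2%:R).
Proof.
move=> k2.
set cnt := #|[set p : T * T | [&& p.1 \in S, p.2 \in S & e p.1 p.2]]|.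
have [Y hY] := sum_G_even S.
have hm : nedges e S = Y by rewrite /nedges cnt_pairs hY addnn doubleK.
have hc : cnt = (Y + Y)%N by rewrite /cnt cnt_pairs hY.
have hb := bin2_mul2 #|S|.
have hsum : \sum_(u in S) \sum_(v in S | v != u) ((1 + (e u v : nat)%:R) / 2%:R : R)
   = ((#|S| * (#|S| - 1) + cnt)%N)%:R / 2%:R.
  rewrite -sum_ones natr_sum mulr_suml; apply: eq_bigr => u _.
  by rewrite natr_sum mulr_suml; apply: eq_bigr => v _; rewrite natrD.
have key : ((#|S| * (#|S| - 1))%N%:R)^-1 * (((#|S| * (#|S| - 1) + cnt)%N)%:R / 2%:R)
   = (1 + (nedges e S)%:R / ('C(#|S|, 2))%:R) / 2%:R :> R.
  rewrite hm hc subn1 -hb.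
  have hC : ('C(#|S|, 2))%:R != 0 :> R.
    rewrite pnatr_eq0 -lt0n; move: hb; case: #|S| k2 => [|[|n]] //= _; lia.
  rewrite !natrD !natrM; field; rewrite hC /=.
  by [].
split.
  rewrite /Eglob -key; apply: ler_wpM2l; first by rewrite invr_ge0 ler0n.
  rewrite -hsum.
  apply: ler_sum => u uS; apply: ler_sum => v /andP[vS _]; exact: pt_bound.
move=> comp; rewrite /Eglob -key -hsum; congr (_ * _).
apply: eq_bigr => u uS; apply: eq_bigr => v /andP[vS vu].
by rewrite comp 1?eq_sym // inv_dist_adj ?comp 1?eq_sym // -[1 + 1]/(2%:R) divff ?pnatr_eq0.
Qed.

End Aux.

Theorem theorem3 (R : realFieldType) (T : finType) (e : rel T)
    (e_sym : symmetric e) (e_irr : irreflexive e)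
    (hn : (0 < #|T|)%N)
    (hdeg : forall i : T, (2 <= #|nbhd e i|)%N) :
  Eloc e R <= (1 + CC e R) / 2%:R /\
  ((forall u v : T, u != v -> e u v) -> Eloc e R = (1 + CC e R) / 2%:R).
Proof.
pose d i : R := (nedges e (nbhd e i))%:R / ('C(#|nbhd e i|, 2))%:R.
have hn0 : (#|T|%:R : R) != 0 by rewrite pnatr_eq0 -lt0n.
have key : (#|T|%:R)^-1 * \sum_i (1 + d i) / 2%:R = (1 + CC e R) / 2%:R.
  rewrite /CC -/d -mulr_suml big_split /= sumr_const. change (#|xpredT|) with #|T|; rewrite /d; field.
  exact: hn0.
split.
  rewrite /Eloc -key; apply: ler_wpM2l; first by rewrite invr_ge0 ler0n.
  apply: ler_sum => i _; exact: (@Eglob_bound _ _ e_sym e_irr R _ (hdeg i)).1.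
move=> comp; rewrite /Eloc -key; congr (_ * _); apply: eq_bigr => i _.
exact: (@Eglob_bound _ _ e_sym e_irr R _ (hdeg i)).2.
Qed.
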